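(* For integers $i,j\ge1$ with $i\neq j$, the central element $m_{i,i,j}=m_{i,i,j}(L_1,\dots,L_4)\in\mathbb Z S_4$ satisfies \begin{align*} \langle 1,m_{i,i,j}\rangle&=\tfrac{1}{24}(1+(-1)^j)\big(6^i+2^i3^j+2^j3^i+9(-1)^i(2^i+2^j)+9\cdot 2^i\big),\\ \langle s_1,m_{i,i,j}\rangle&=\tfrac{1}{24}(1-(-1)^j)\big(6^i+2^i3^j+2^j3^i+3(-1)^i(2^i+2^j)-3\cdot 2^i\big),\\ \langle s_{12},m_{i,i,j}\rangle&=\tfrac{1}{24}(1+(-1)^j)\big(6^i+2^i3^j+2^j3^i\big),\\ \langle s_{13},m_{i,i,j}\rangle&=\tfrac{1}{24}(1+(-1)^j)\big(6^i+2^i3^j+2^j3^i-3(-1)^i(2^i+2^j)-3\cdot 2^i\big),\\ \langle s_{123},m_{i,i,j}\rangle&=\tfrac{1}{24}(1-(-1)^j)\big(6^i+2^i3^j+2^j3^i-3(-1)^i(2^i+2^j)+3\cdot 2^i\big). \end{align*}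
   Context: $S_4$ is the symmetric group on $\{1,2,3,4\}$, $\mathbb Z S_4$ its integral group ring. Let $s_1=(1\,2)$, $s_2=(2\,3)$, $s_3=(3\,4)$, $s_{12}=s_1s_2$, $s_{13}=s_1s_3$, $s_{123}=s_1s_2s_3$. The Jucys–Murphy elements are $L_1=0$ and $L_i=\sum_{k=1}^{i-1}(k\ i)$ for $i=2,3,4$; they pairwise commute. For a partition $\mu=(\mu_1,\dots,\mu_r)$, $m_\mu(x_1,\dots,x_4)$ is the monomial symmetric polynomial: the sum of all distinct monomials $x_1^{\alpha_1}\cdots x_4^{\alpha_4}$ with $(\alpha_1,\dots,\alpha_4)$ a rearrangement of $(\mu_1,\dots,\mu_r,0,\dots,0)$. A subscript list such as $m_{i,i,j}$ denotes $m_\mu(L_1,\dots,L_4)$ where $\mu$ is the partition whose parts are the listed entries (sorted decreasingly). For $w\in S_4$ and $h\in\mathbb Z S_4$, $\langle w,h\rangle$ denotes the coefficient of $w$ in $h$; for central $h$ this equals the coefficient of the class sum of the conjugacy class of $w$. *)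

(* Defs.v *)
(* The integral group ring Z S_4 is modelled as the type of
   all functions {perm 'I_4} -> int (coefficient functions); the point
   {1,2,3,4} is encoded as 'I_4 = {0,1,2,3} (k+1 <-> k). *)
From HB Require Import structures.
From mathcomp Require Import all_boot all_order all_algebra all_fingroup.
Set Implicit Arguments. Unset Strict Implicit. Unset Printing Implicit Defensive.
Import GRing.Theory Num.Theory.
Local Open Scope ring_scope.

Definition S4 := {perm 'I_4}.
Definition ZS4 := S4 -> int.

Definition gdelta (w : S4) : ZS4 := fun g => (g == w)%:R.
Definition gone : ZS4 := gdelta 1%g.
Definition gadd (a b : ZS4) : ZS4 := fun g => a g + b g.
Definition gmul (a b : ZS4) : ZS4 := fun g => \sum_(h : S4) a h * b (h^-1 * g)%g.
Definition gpow (a : ZS4) (n : nat) : ZS4 := iter n (gmul a) gone.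

(* Jucys-Murphy elements: L_(k+1) = sum_{l < k} (l k)  (transpositions) *)
Definition JM (k : 'I_4) : ZS4 :=
  fun g => \sum_(l < 4 | (l < k)%N) gdelta (tperm l k) g.

Definition JMmono (a : 'I_4 -> nat) : ZS4 :=
  gmul (gpow (JM (inord 0)) (a (inord 0)))
   (gmul (gpow (JM (inord 1)) (a (inord 1)))
    (gmul (gpow (JM (inord 2)) (a (inord 2)))
           (gpow (JM (inord 3)) (a (inord 3))))).

(* monomial symmetric polynomial m_mu(L_1,..,L_4) for a list mu of (positive)
   parts of length <= 4: sum over all DISTINCT exponent vectors that are
   rearrangements of mu padded with zeros. Exponent vectors are enumerated
   (each exactly once) as finite functions into 'I_(N+1), N bounding the parts. *)
Definition msym (mu : seq nat) : ZS4 :=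
  let N := foldr maxn 0%N mu in
  fun g => \sum_(a : {ffun 'I_4 -> 'I_N.+1}
               | perm_eq [seq (val (a k)) | k <- enum 'I_4]
                         (mu ++ nseq (4 - size mu) 0%N))
             JMmono (fun k => val (a k)) g.

Definition coef (w : S4) (h : ZS4) : int := h w.

Definition s1 : S4 := tperm (inord 0 : 'I_4) (inord 1).
Definition s2 : S4 := tperm (inord 1 : 'I_4) (inord 2).
Definition s3 : S4 := tperm (inord 2 : 'I_4) (inord 3).
Definition s12 : S4 := (s1 * s2)%g.
Definition s13 : S4 := (s1 * s3)%g.
Definition s123 : S4 := (s1 * s2 * s3)%g.

(* Main.v *)
Require Import Defs.
From HB Require Import structures.
From mathcomp Require Import all_boot all_order all_algebra all_fingroup.
From Stdlib Require Import FunctionalExtensionality Ring.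
Set Implicit Arguments. Unset Strict Implicit. Unset Printing Implicit Defensive.
Import GRing.Theory Num.Theory.
Local Open Scope ring_scope.

Definition o0 : 'I_4 := @Ordinal 4 0 isT.
Definition o1 : 'I_4 := @Ordinal 4 1 isT.
Definition o2 : 'I_4 := @Ordinal 4 2 isT.
Definition o3 : 'I_4 := @Ordinal 4 3 isT.
Lemma io0 : (inord 0 : 'I_4) = o0. Proof. by apply: val_inj; rewrite /= inordK. Qed.
Lemma io1 : (inord 1 : 'I_4) = o1. Proof. by apply: val_inj; rewrite /= inordK. Qed.
Lemma io2 : (inord 2 : 'I_4) = o2. Proof. by apply: val_inj; rewrite /= inordK. Qed.
Lemma io3 : (inord 3 : 'I_4) = o3. Proof. by apply: val_inj; rewrite /= inordK. Qed.

Lemma ordE (k : 'I_4) : [\/ k = o0, k = o1, k = o2 | k = o3].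
Proof.
case: k => [[|[|[|[|n]]]] Hk] //.
- by constructor 1; apply: val_inj.
- by constructor 2; apply: val_inj.
- by constructor 3; apply: val_inj.
- by constructor 4; apply: val_inj.
Qed.

Lemma gmulDr (a b c : ZS4) g : gmul a (fun x => b x + c x) g = gmul a b g + gmul a c g.
Proof. by rewrite /gmul -big_split /=; apply: eq_bigr => h _; rewrite mulrDr. Qed.
Lemma gmulZr (a b : ZS4) k g : gmul a (fun x => k * b x) g = k * gmul a b g.
Proof. by rewrite /gmul mulr_sumr; apply: eq_bigr => h _; rewrite mulrCA. Qed.
Lemma gmulDl (a b c : ZS4) g : gmul (fun x => a x + b x) c g = gmul a c g + gmul b c g.
Proof. by rewrite /gmul -big_split /=; apply: eq_bigr => h _; rewrite mulrDl. Qed.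
Lemma gmulZl (a b : ZS4) k g : gmul (fun x => k * a x) b g = k * gmul a b g.
Proof. by rewrite /gmul mulr_sumr; apply: eq_bigr => h _; rewrite mulrA. Qed.
Lemma gmul1l (a : ZS4) : gmul gone a = a.
Proof.
apply: functional_extensionality => g; rewrite /gmul (bigD1 1%g) //= big1 ?addr0.
  by rewrite /gone /gdelta eqxx mul1r invg1 mul1g.
by move=> h /negbTE hn; rewrite /gone /gdelta hn mul0r.
Qed.

Definition evp (l : seq (int * S4)) : ZS4 := fun g => \sum_(p <- l) p.1 * (g == p.2)%:R.
Definition mulL (l1 l2 : seq (int * S4)) : seq (int * S4) :=
  [seq (p.1 * q.1, (p.2 * q.2)%g) | p <- l1, q <- l2].
Definition powL (l : seq (int * S4)) n := iter n (mulL l) [:: (1, 1%g)].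

Lemma gmul_evp l1 l2 : gmul (evp l1) (evp l2) = evp (mulL l1 l2).
Proof.
apply: functional_extensionality => g.
rewrite /gmul /evp /mulL big_allpairs_dep /=.
transitivity (\sum_(h : S4) \sum_(p <- l1) \sum_(q <- l2)
   (p.1 * (h == p.2)%:R) * (q.1 * ((h^-1 * g)%g == q.2)%:R)).
  apply: eq_bigr => h _; rewrite big_distrl /=; apply: eq_bigr => p _.
  by rewrite big_distrr.
rewrite exchange_big /=; apply: eq_bigr => p _.
rewrite exchange_big /=; apply: eq_bigr => q _.
rewrite (bigD1 p.2) //= big1 ?addr0; last first.
  by move=> h /negbTE hn; rewrite hn mulr0 mul0r.
rewrite eqxx mulr1 mulrA; congr (_ * _%:R).
case: eqP => [E|NE]; case: eqP => [E2|NE2] //. 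
  by case: NE2; rewrite -E mulKVg.
by case: NE; rewrite E2 mulKg.
Qed.

Lemma gone_evp : gone = evp [:: (1, 1%g)].
Proof.
by apply: functional_extensionality => g; rewrite /gone /gdelta /evp big_cons big_nil mul1r addr0.
Qed.

Lemma gpow_evp l n : gpow (evp l) n = evp (powL l n).
Proof.
elim: n => [|n IH]; first by rewrite /gpow /= gone_evp.
by rewrite /gpow /= -/(gpow _ n) IH gmul_evp.
Qed.

Lemma bigI4 (F : 'I_4 -> int) : \sum_(l < 4) F l = F o0 + F o1 + F o2 + F o3.
Proof.
rewrite !big_ord_recr big_ord0 /= add0r.
by congr (F _ + F _ + F _ + F _); apply: val_inj.
Qed.

Definition l2 : seq (int * S4) := [:: (1, tperm o0 o1)].
Definition l3 : seq (int * S4) := [:: (1, tperm o0 o2); (1, tperm o1 o2)].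
Definition l4 : seq (int * S4) := [:: (1, tperm o0 o3); (1, tperm o1 o3); (1, tperm o2 o3)].

Lemma JM1 : JM (inord 1) = evp l2.
Proof.
rewrite io1; apply: functional_extensionality => g.
rewrite /JM big_mkcond bigI4 /= /evp /l2 !big_cons big_nil /gdelta.
by rewrite !mul1r !addr0.
Qed.
Lemma JM2 : JM (inord 2) = evp l3.
Proof.
rewrite io2; apply: functional_extensionality => g.
rewrite /JM big_mkcond bigI4 /= /evp /l3 !big_cons big_nil /gdelta.
by rewrite !mul1r !addr0.
Qed.
Lemma JM3 : JM (inord 3) = evp l4.
Proof.
rewrite io3; apply: functional_extensionality => g.
rewrite /JM big_mkcond bigI4 /= /evp /l4 !big_cons big_nil /gdelta.
by rewrite !mul1r !addr0 !addrA.
Qed.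
Lemma JM0 : JM (inord 0) = fun _ => 0.
Proof.
rewrite io0; apply: functional_extensionality => g.
by rewrite /JM big_mkcond bigI4 /= !addr0.
Qed.

Definition ords : seq 'I_4 := [:: o0; o1; o2; o3].
Definition code (g : S4) : seq nat := [seq val (g k) | k <- ords].

Lemma nth_code (g : S4) (k : 'I_4) : nth 0%N (code g) k = val (g k).
Proof. by case: (ordE k) => ->. Qed.

Lemma code_inj : injective code.
Proof.
move=> x y E; apply/permP => k; apply: val_inj.
by rewrite -!nth_code E.
Qed.

Lemma eq_code (x y : S4) : (x == y) = (code x == code y).
Proof. by apply/eqP/eqP => [->|/code_inj]. Qed.

Definition cmul (s t : seq nat) : seq nat := [seq nth 0%N t (nth 0%N s k) | k <- iota 0 4].

Lemma code_mul (x y : S4) : code (x * y)%g = cmul (code x) (code y).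
Proof.
rewrite /cmul /code /= !permM.
by rewrite -!(nth_code y) /=.
Qed.

Lemma code1 : code 1%g = [:: 0; 1; 2; 3]%N.
Proof. by rewrite /code /= !perm1. Qed.

Lemma code_tperm (x y : 'I_4) :
  code (tperm x y) = [seq val (if k == x then y else if k == y then x else k) | k <- ords].
Proof. by rewrite /code /tperm; apply: eq_map => k; rewrite permE. Qed.

Definition evc (L : seq (int * seq nat)) (c : seq nat) : int :=
  foldr (fun p acc => p.1 * (c == p.2)%:R + acc) 0 L.
Definition cp (p : int * S4) : int * seq nat := (p.1, code p.2).
Definition mulLc (L1 L2 : seq (int * seq nat)) : seq (int * seq nat) :=
  [seq (p.1 * q.1, cmul p.2 q.2) | p <- L1, q <- L2].
Definition powLc (L : seq (int * seq nat)) n := iter n (mulLc L) [:: (1, [:: 0; 1; 2; 3]%N)].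

Lemma evp_evc l g : evp l g = evc (map cp l) (code g).
Proof.
elim: l => [|p l IH]; first by rewrite /evp big_nil.
by rewrite /evp big_cons -/(evp l g) IH /= eq_code.
Qed.

Lemma map_mulL l1 l2 : map cp (mulL l1 l2) = mulLc (map cp l1) (map cp l2).
Proof.
elim: l1 => [|p l1 IH] //=.
rewrite map_cat IH; congr (_ ++ _).
rewrite -!map_comp; apply: eq_map => q /=.
by rewrite /cp /= code_mul.
Qed.

Lemma map_powL l n : map cp (powL l n) = powLc (map cp l) n.
Proof.
elim: n => [|n IH]; first by rewrite /= /cp /= code1.
by rewrite /powL /= map_mulL -/(powL l n) IH.
Qed.

Definition C2 : seq (int * seq nat) := [:: (1, [:: 1; 0; 2; 3]%N)].
Definition C3 : seq (int * seq nat) := [:: (1, [:: 2; 1; 0; 3]%N); (1, [:: 0; 2; 1; 3]%N)].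
Definition C4 : seq (int * seq nat) :=
  [:: (1, [:: 3; 1; 2; 0]%N); (1, [:: 0; 3; 2; 1]%N); (1, [:: 0; 1; 3; 2]%N)].

Lemma mC2 : map cp l2 = C2.
Proof. by rewrite /= /cp /= code_tperm; vm_compute. Qed.
Lemma mC3 : map cp l3 = C3.
Proof. by rewrite /= /cp /= !code_tperm; vm_compute. Qed.
Lemma mC4 : map cp l4 = C4.
Proof. by rewrite /= /cp /= !code_tperm; vm_compute. Qed.

Definition P k n : ZS4 := gpow (JM (inord k)) n.

Lemma P1E n g : P 1 n g = evc (powLc C2 n) (code g).
Proof. by rewrite /P JM1 gpow_evp evp_evc map_powL mC2. Qed.
Lemma P2E n g : P 2 n g = evc (powLc C3 n) (code g).
Proof. by rewrite /P JM2 gpow_evp evp_evc map_powL mC3. Qed.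
Lemma P3E n g : P 3 n g = evc (powLc C4 n) (code g).
Proof. by rewrite /P JM3 gpow_evp evp_evc map_powL mC4. Qed.


Definition radd (x y : rat) : rat := x + y.
Definition rmul (x y : rat) : rat := x * y.
Definition ropp (x : rat) : rat := - x.
Definition rsub (x y : rat) : rat := x - y.
Definition r0 : rat := 0.
Definition r1 : rat := 1.
Definition rnat (n : nat) : rat := n%:R.
Definition rinv (x : rat) : rat := x^-1.
Definition rexp (x : rat) (n : nat) : rat := x ^+ n.

Lemma rat_rt : @ring_theory rat r0 r1 radd rmul rsub ropp eq.
Proof.
constructor; rewrite /radd /rmul /rsub /ropp /r0 /r1 => *;
 [exact: add0r|exact: addrC|exact: addrA|exact: mul1r|exact: mulrC|exact: mulrA|exact: mulrDl|by []|exact: subrr].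
Qed.
Lemma rat_rm : @ring_morph rat r0 r1 radd rmul rsub ropp eq
   rat r0 r1 radd rmul rsub ropp (fun x y => x == y) id.
Proof. by constructor => // x y /eqP. Qed.

Ltac isNatcst t := match t with O => constr:(true) | S ?n => isNatcst n | _ => constr:(false) end.
Ltac isRcst t := match t with
  | rnat ?n => isNatcst n
  | rinv ?x => isRcst x
  | r1 => constr:(true)
  | r0 => constr:(true)
  | _ => constr:(false) end.
Ltac ratcst t := match isRcst t with true => t | _ => constr:(InitialRing.NotConstant) end.

Add Ring RatRing : rat_rt (morphism rat_rm, constants [ratcst]).

Lemma raddE (x y : rat) : x + y = radd x y. by []. Qed.
Lemma rmulE (x y : rat) : x * y = rmul x y. by []. Qed.
Lemma roppE (x : rat) : - x = ropp x. by []. Qed.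
Lemma rinvE (x : rat) : x^-1 = rinv x. by []. Qed.
Lemma rexpE (x : rat) n : x ^+ n = rexp x n. by []. Qed.
Lemma rnatE n : n%:R = rnat n :> rat. by []. Qed.
Lemma r0E : 0 = r0 :> rat. by []. Qed.
Lemma r1E : 1 = r1 :> rat. by []. Qed.
Ltac rnorm := rewrite ?rexpE ?rinvE ?rmulE ?raddE ?roppE ?rnatE ?r1E ?r0E;
  match goal with |- @eq _ ?a ?b => change (@eq rat a b) end.
Ltac rring := rnorm; ring.

Lemma PS k n : P k n.+1 = gmul (JM (inord k)) (P k n).
Proof. by []. Qed.

Definition scL (k : int) (L : seq (int * seq nat)) := [seq (k * p.1, p.2) | p <- L].
Lemma evc_cat L1 L2 c : evc (L1 ++ L2) c = evc L1 c + evc L2 c.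
Proof. by elim: L1 => [|p L1 IH] /=; rewrite ?add0r // IH addrA. Qed.
Lemma evc_sc k L c : evc (scL k L) c = k * evc L c.
Proof. by elim: L => [|p L IH] /=; rewrite ?mulr0 // IH mulrDr mulrA. Qed.
Lemma evc_out L c : c \notin map snd L -> evc L c = 0.
Proof.
elim: L => [|p L IH] //=; rewrite inE negb_or => /andP[/negbTE -> /IH ->].
by rewrite mulr0 addr0.
Qed.
Lemma evc_ext L1 L2 :
  all (fun c => evc L1 c == evc L2 c) (undup (map snd (L1 ++ L2))) ->
  forall c, evc L1 c = evc L2 c.
Proof.
move=> /allP H c; case: (boolP (c \in map snd (L1 ++ L2))) => hc.
  by apply/eqP; apply: H; rewrite mem_undup.
move: hc; rewrite map_cat mem_cat negb_or => /andP[h1 h2].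
by rewrite !evc_out.
Qed.

Lemma P1rec n : P 1 (n + 2) = P 1 n.
Proof.
elim: n => [|n IH].
  apply: functional_extensionality => g; rewrite !P1E.
  by move: (code g) => c; vm_compute.
by rewrite addSn PS IH.
Qed.

Lemma P2rec n : P 2 (n + 4) = fun g => 5 * P 2 (n + 2) g + (-4) * P 2 n g.
Proof.
elim: n => [|n IH].
  apply: functional_extensionality => g; rewrite !P2E.
  rewrite -(evc_sc 5) -(evc_sc (-4)) -evc_cat.
  by apply: evc_ext; vm_compute.
apply: functional_extensionality => g.
by rewrite !addSn !PS IH gmulDr !gmulZr.
Qed.

Lemma P3rec n : P 3 (n + 7) =
  fun g => 14 * P 3 (n + 5) g + ((-49) * P 3 (n + 3) g + 36 * P 3 (n + 1) g).
Proof.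
elim: n => [|n IH].
  apply: functional_extensionality => g; rewrite !P3E.
  rewrite -(evc_sc 14) -(evc_sc (-49)) -(evc_sc 36) -!evc_cat.
  by apply: evc_ext; vm_compute.
apply: functional_extensionality => g.
by rewrite !addSn !PS IH gmulDr gmulZr gmulDr !gmulZr.
Qed.

Definition Fw (w : S4) a b c : int := gmul (P 1 a) (gmul (P 2 b) (P 3 c)) w.

Lemma FwE w a b c :
  Fw w a b c = evc (mulLc (powLc C2 a) (mulLc (powLc C3 b) (powLc C4 c))) (code w).
Proof.
by rewrite /Fw /P JM1 JM2 JM3 !gpow_evp !gmul_evp evp_evc !map_mulL !map_powL mC2 mC3 mC4.
Qed.

Lemma Fw_a w a b c : Fw w (a + 2) b c = Fw w a b c.
Proof. by rewrite /Fw P1rec. Qed.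
Lemma Fw_b w a b c : Fw w a (b + 4) c = 5 * Fw w a (b + 2) c + (-4) * Fw w a b c.
Proof.
rewrite /Fw P2rec.
have -> : gmul (fun g => 5 * P 2 (b + 2) g + -4 * P 2 b g) (P 3 c) =
   fun g => 5 * gmul (P 2 (b + 2)) (P 3 c) g + (-4) * gmul (P 2 b) (P 3 c) g.
  by apply: functional_extensionality => g; rewrite gmulDl !gmulZl.
by rewrite gmulDr !gmulZr.
Qed.
Lemma Fw_c w a b c : Fw w a b (c + 7) =
  14 * Fw w a b (c + 5) + ((-49) * Fw w a b (c + 3) + 36 * Fw w a b (c + 1)).
Proof.
rewrite /Fw P3rec.
set X := gmul (P 2 b) _.
have -> : X = fun g => 14 * gmul (P 2 b) (P 3 (c + 5)) g +
   ((-49) * gmul (P 2 b) (P 3 (c + 3)) g + 36 * gmul (P 2 b) (P 3 (c + 1)) g).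
  by apply: functional_extensionality => g; rewrite /X gmulDr gmulZr gmulDr !gmulZr.
by rewrite gmulDr gmulZr gmulDr !gmulZr.
Qed.

Definition term (t : rat * rat * rat * rat) a b c : rat :=
  t.1.1.1 * t.1.1.2 ^+ a * t.1.2 ^+ b * t.2 ^+ c.
Definition G (L : seq (rat * rat * rat * rat)) a b c : rat :=
  foldr (fun t acc => term t a b c + acc) 0 L.

Definition rootsok (L : seq (rat * rat * rat * rat)) :=
  all (fun t => (t.1.1.2 ^+ 2 == 1) &&
     (t.1.2 ^+ 4 == 5%:R * t.1.2 ^+ 2 - 4%:R) &&
     (t.2 ^+ 7 == 14%:R * t.2 ^+ 5 - 49%:R * t.2 ^+ 3 + 36%:R * t.2 ^+ 1)) L.

Lemma G_a L a b c : rootsok L -> G L (a + 2) b c = G L a b c.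
Proof.
elim: L => [|t L IH] //= /andP[/andP[/andP[/eqP h _] _] /IH ->]; congr (_ + _).
by rewrite /term exprD h mulr1.
Qed.
Lemma G_b L a b c : rootsok L ->
  G L a (b + 4) c = 5%:R * G L a (b + 2) c - 4%:R * G L a b c.
Proof.
elim: L => [|t L IH] /=; first by move=> _; rring.
move=> /andP[/andP[/andP[_ /eqP h] _] /IH ->].
rewrite /term !exprD h; rring.
Qed.
Lemma G_c L a b c : rootsok L ->
  G L a b (c + 7) = 14%:R * G L a b (c + 5) - 49%:R * G L a b (c + 3) + 36%:R * G L a b (c + 1).
Proof.
elim: L => [|t L IH] /=; first by move=> _; rring.
move=> /andP[/andP[_ /eqP h] /IH ->].
rewrite /term !exprD h; rring.
Qed.

Lemma ltn_aux x k m : (k <= x)%N -> (m < k)%N -> (x - k + m < x)%N.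
Proof. by move=> hk hm; rewrite -{2}(subnK hk) ltn_add2l. Qed.

Lemma uniq3 (f g : nat -> nat -> nat -> rat) :
  (forall a b c, f (a + 2)%N b c = f a b c) -> (forall a b c, g (a + 2)%N b c = g a b c) ->
  (forall a b c, f a (b + 4)%N c = 5%:R * f a (b + 2)%N c - 4%:R * f a b c) ->
  (forall a b c, g a (b + 4)%N c = 5%:R * g a (b + 2)%N c - 4%:R * g a b c) ->
  (forall a b c, f a b (c + 7)%N = 14%:R * f a b (c + 5)%N - 49%:R * f a b (c + 3)%N + 36%:R * f a b (c + 1)%N) ->
  (forall a b c, g a b (c + 7)%N = 14%:R * g a b (c + 5)%N - 49%:R * g a b (c + 3)%N + 36%:R * g a b (c + 1)%N) ->
  (forall a b c, (a < 2)%N -> (b < 4)%N -> (c < 7)%N -> f a b c = g a b c) ->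
  forall a b c, f a b c = g a b c.
Proof.
move=> fa ga fb gb fc gc box a b c.
elim/ltn_ind: c a b => c IHc a b.
case: (ltnP c 7) => hc; last first.
  have -> : c = (c - 7 + 7)%N by rewrite subnK.
  by rewrite fc gc !IHc //; apply: ltn_aux.
elim/ltn_ind: b a => b IHb a.
case: (ltnP b 4) => hb; last first.
  have -> : b = (b - 4 + 4)%N by rewrite subnK.
  by rewrite fb gb !IHb //; [rewrite ltn_subrL /= (leq_trans _ hb) | apply: ltn_aux].
elim/ltn_ind: a => a IHa.
case: (ltnP a 2) => ha; first exact: box.
have -> : a = (a - 2 + 2)%N by rewrite subnK.
by rewrite fa ga IHa // ltn_subrL /= (leq_trans _ ha).
Qed.

Definition K1 : seq (rat * rat * rat * rat) := [::
  ((1%:R / 12%:R), 1, -1, 0);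
  ((1%:R / 8%:R), 1, -1, 2%:R);
  ((1%:R / 8%:R), 1, -1, - 2%:R);
  ((1%:R / 8%:R), 1, 2%:R, -1);
  ((1%:R / 24%:R), 1, 2%:R, 3%:R);
  ((1%:R / 12%:R), -1, 1, 0);
  ((1%:R / 8%:R), -1, 1, 2%:R);
  ((1%:R / 8%:R), -1, 1, - 2%:R);
  ((1%:R / 8%:R), -1, - 2%:R, 1);
  ((1%:R / 24%:R), -1, - 2%:R, - 3%:R)].
Definition Ks1 : seq (rat * rat * rat * rat) := [::
  ((1%:R / 12%:R), 1, -1, 0);
  ((1%:R / 8%:R), 1, -1, 2%:R);
  ((1%:R / 8%:R), 1, -1, - 2%:R);
  ((1%:R / 8%:R), 1, 2%:R, -1);
  ((1%:R / 24%:R), 1, 2%:R, 3%:R);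
  (- (1%:R / 12%:R), -1, 1, 0);
  (- (1%:R / 8%:R), -1, 1, 2%:R);
  (- (1%:R / 8%:R), -1, 1, - 2%:R);
  (- (1%:R / 8%:R), -1, - 2%:R, 1);
  (- (1%:R / 24%:R), -1, - 2%:R, - 3%:R)].
Definition Ks12 : seq (rat * rat * rat * rat) := [::
  (- (1%:R / 24%:R), 1, -1, 0);
  (- (1%:R / 16%:R), 1, -1, 2%:R);
  (- (1%:R / 16%:R), 1, -1, - 2%:R);
  ((1%:R / 8%:R), 1, 2%:R, -1);
  ((1%:R / 24%:R), 1, 2%:R, 3%:R);
  (- (1%:R / 24%:R), -1, 1, 0);
  (- (1%:R / 16%:R), -1, 1, 2%:R);
  (- (1%:R / 16%:R), -1, 1, - 2%:R);
  ((1%:R / 8%:R), -1, - 2%:R, 1);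
  ((1%:R / 24%:R), -1, - 2%:R, - 3%:R)].
Definition Ks13 : seq (rat * rat * rat * rat) := [::
  ((1%:R / 12%:R), 1, -1, 0);
  ((1%:R / 24%:R), 1, -1, 2%:R);
  (- (1%:R / 8%:R), 1, -1, - 2%:R);
  (- (1%:R / 24%:R), 1, 2%:R, -1);
  ((1%:R / 24%:R), 1, 2%:R, 3%:R);
  ((1%:R / 12%:R), -1, 1, 0);
  (- (1%:R / 8%:R), -1, 1, 2%:R);
  ((1%:R / 24%:R), -1, 1, - 2%:R);
  (- (1%:R / 24%:R), -1, - 2%:R, 1);
  ((1%:R / 24%:R), -1, - 2%:R, - 3%:R)].
Definition Ks123 : seq (rat * rat * rat * rat) := [::
  (- (1%:R / 24%:R), 1, -1, 0);
  (- (1%:R / 48%:R), 1, -1, 2%:R);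
  ((1%:R / 16%:R), 1, -1, - 2%:R);
  (- (1%:R / 24%:R), 1, 2%:R, -1);
  ((1%:R / 24%:R), 1, 2%:R, 3%:R);
  ((1%:R / 24%:R), -1, 1, 0);
  (- (1%:R / 16%:R), -1, 1, 2%:R);
  ((1%:R / 48%:R), -1, 1, - 2%:R);
  ((1%:R / 24%:R), -1, - 2%:R, 1);
  (- (1%:R / 24%:R), -1, - 2%:R, - 3%:R)].

Definition boxok (w : seq nat) (L : seq (rat * rat * rat * rat)) :=
  all (fun a => all (fun b => all (fun c =>
    ((evc (mulLc (powLc C2 a) (mulLc (powLc C3 b) (powLc C4 c))) w)%:~R == G L a b c))
    (iota 0 7)) (iota 0 4)) (iota 0 2).

Lemma FG w L : rootsok L -> boxok (code w) L ->
  forall a b c, (Fw w a b c)%:~R = G L a b c.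
Proof.
move=> hr hb; apply: uniq3.
- by move=> a b c; rewrite Fw_a.
- by move=> *; apply: G_a.
- move=> a b c; rewrite Fw_b intrD !intrM ?intrN ?mulrz_nat; rring.
- by move=> *; apply: G_b.
- move=> a b c; rewrite Fw_c !intrD !intrM ?intrN ?mulrz_nat; rring.
- by move=> *; apply: G_c.
- move=> a b c ha hb' hc; rewrite FwE.
  move: hb => /allP /(_ a); rewrite mem_iota ha => /(_ isT) /allP /(_ b).
  rewrite mem_iota hb' => /(_ isT) /allP /(_ c); rewrite mem_iota hc => /(_ isT).
  by move/eqP.
Qed.


Lemma cd1 : code 1%g = [:: 0; 1; 2; 3]%N. Proof. exact: code1. Qed.
Lemma cds1 : code s1 = [:: 1; 0; 2; 3]%N.
Proof. by rewrite /s1 io0 io1 code_tperm; vm_compute. Qed.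
Lemma cds2 : code s2 = [:: 0; 2; 1; 3]%N.
Proof. by rewrite /s2 io1 io2 code_tperm; vm_compute. Qed.
Lemma cds3 : code s3 = [:: 0; 1; 3; 2]%N.
Proof. by rewrite /s3 io2 io3 code_tperm; vm_compute. Qed.
Lemma cds12 : code s12 = cmul [:: 1; 0; 2; 3]%N [:: 0; 2; 1; 3]%N.
Proof. by rewrite /s12 code_mul cds1 cds2. Qed.
Lemma cds13 : code s13 = cmul [:: 1; 0; 2; 3]%N [:: 0; 1; 3; 2]%N.
Proof. by rewrite /s13 code_mul cds1 cds3. Qed.
Lemma cds123 : code s123 = cmul (cmul [:: 1; 0; 2; 3]%N [:: 0; 2; 1; 3]%N) [:: 0; 1; 3; 2]%N.
Proof. by rewrite /s123 !code_mul cds1 cds2 cds3. Qed.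

Lemma FG1 a b c : (Fw 1%g a b c)%:~R = G K1 a b c.
Proof. by apply: FG; [vm_compute | rewrite cd1; vm_compute]. Qed.
Lemma FGs1 a b c : (Fw s1 a b c)%:~R = G Ks1 a b c.
Proof. by apply: FG; [vm_compute | rewrite cds1; vm_compute]. Qed.
Lemma FGs12 a b c : (Fw s12 a b c)%:~R = G Ks12 a b c.
Proof. by apply: FG; [vm_compute | rewrite cds12; vm_compute]. Qed.
Lemma FGs13 a b c : (Fw s13 a b c)%:~R = G Ks13 a b c.
Proof. by apply: FG; [vm_compute | rewrite cds13; vm_compute]. Qed.
Lemma FGs123 a b c : (Fw s123 a b c)%:~R = G Ks123 a b c.
Proof. by apply: FG; [vm_compute | rewrite cds123; vm_compute]. Qed.

Lemma p4 (x y z w : nat) : perm_eq [:: x; y; z; w] [:: w; x; y; z].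
Proof. apply/seq.permP => P /=. rewrite !addn0. rewrite [RHS]addnC. by rewrite -!addnA. Qed.
Lemma p3a (x y : nat) : perm_eq [:: x; y; x] [:: x; x; y].
Proof. apply/seq.permP => P /=. rewrite !addn0. by rewrite [(P y + _)%N]addnC. Qed.
Lemma p3b (x y : nat) : perm_eq [:: y; x; x] [:: x; x; y].
Proof. apply/seq.permP => P /=. rewrite !addn0. by rewrite addnC -addnA. Qed.

Lemma cases3 (i j x1 x2 x3 : nat) : i != j -> perm_eq [:: x1; x2; x3] [:: i; i; j] ->
  [|| [&& x1 == i, x2 == i & x3 == j], [&& x1 == i, x2 == j & x3 == i]
    | [&& x1 == j, x2 == i & x3 == i]].
Proof.
move=> hij hp.
have m1 : x1 \in [:: i; i; j] by rewrite -(perm_mem hp) inE eqxx.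
have m2 : x2 \in [:: i; i; j] by rewrite -(perm_mem hp) !inE eqxx ?orbT.
have m3 : x3 \in [:: i; i; j] by rewrite -(perm_mem hp) !inE eqxx ?orbT.
have hc := seq.permP hp (pred1 j).
have hji : (j == i) = false by rewrite eq_sym (negbTE hij).
move: m1 m2 m3 hc; rewrite !inE !orbA !orbb.
case/orP => /eqP ->; case/orP => /eqP ->; case/orP => /eqP -> /=;
  by rewrite ?eqxx ?hji ?(negbTE hij) => /eqP.
Qed.

Lemma enumI4 : enum 'I_4 = ords.
Proof. by apply: (inj_map val_inj); rewrite val_enum_ord. Qed.

Lemma gmul0l (b : ZS4) : gmul (fun _ => 0) b = fun _ => 0.
Proof. by apply: functional_extensionality => g; rewrite /gmul big1 // => h _; rewrite mul0r. Qed.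

Lemma JMmono_0 (e : 'I_4 -> nat) g : e (inord 0) = 0%N ->
  JMmono e g = Fw g (e (inord 1)) (e (inord 2)) (e (inord 3)).
Proof. by rewrite /JMmono => ->; rewrite [gpow _ 0]/= gmul1l. Qed.

Lemma JMmono_S (e : 'I_4 -> nat) g : e (inord 0) != 0%N -> JMmono e g = 0.
Proof.
rewrite /JMmono; case: (e (inord 0)) => // n _.
by rewrite /gpow /= JM0 !gmul0l.
Qed.

Section Red.
Variables (N i j : nat).
Hypotheses (hi : (i <= N)%N) (hj : (j <= N)%N) (hij : i != j).

Definition mk (e : seq nat) : {ffun 'I_4 -> 'I_N.+1} := [ffun k : 'I_4 => inord (nth 0%N e k)].

Lemma mkE e (k : 'I_4) : (nth 0%N e k <= N)%N -> val (mk e k) = nth 0%N e k.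
Proof. by move=> h; rewrite ffunE /= inordK. Qed.

Definition e1 := [:: 0; i; i; j]%N.
Definition e2 := [:: 0; i; j; i]%N.
Definition e3 := [:: 0; j; i; i]%N.

Lemma mkEo e : all (fun n => n <= N)%N e -> size e = 4%N ->
  [/\ val (mk e o0) = nth 0%N e 0, val (mk e o1) = nth 0%N e 1,
      val (mk e o2) = nth 0%N e 2 & val (mk e o3) = nth 0%N e 3].
Proof.
move=> /allP ha hs; split; rewrite mkE //; apply: ha; apply: mem_nth; by rewrite hs.
Qed.

Lemma charac (a : {ffun 'I_4 -> 'I_N.+1}) :
  (perm_eq [seq val (a k) | k <- enum 'I_4] [:: i; i; j; 0%N] && (val (a (inord 0)) == 0%N))
  = (a \in [:: mk e1; mk e2; mk e3]).
Proof.
rewrite enumI4 io0 /= !inE.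
have ok e : all (fun n => n <= N)%N e -> size e = 4%N ->
   (a == mk e) = [&& val (a o0) == nth 0%N e 0, val (a o1) == nth 0%N e 1,
                     val (a o2) == nth 0%N e 2 & val (a o3) == nth 0%N e 3].
  move=> ha hs; case: (mkEo ha hs) => h0 h1 h2 h3.
  apply/eqP/idP => [->|/and4P[/eqP a0 /eqP a1 /eqP a2 /eqP a3]].
    by rewrite h0 h1 h2 h3 !eqxx.
  apply/ffunP => k; apply: val_inj.
  by case: (ordE k) => ->; rewrite ?h0 ?h1 ?h2 ?h3.
rewrite !ok /= ?hi ?hj //.
apply/idP/idP.
  move=> /andP[hp /eqP h0]; rewrite h0 eqxx /=.
  have hp' : perm_eq [:: val (a o1); val (a o2); val (a o3)] [:: i; i; j].
    by rewrite -(perm_cons 0%N); rewrite h0 in hp; exact: (perm_trans hp (p4 _ _ _ _)).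
  by have := cases3 hij hp'.
case/or3P => /and4P[/eqP h0 /eqP h1 /eqP h2 /eqP h3];
  rewrite h0 eqxx andbT perm_sym; apply: (perm_trans (p4 _ _ _ _)); rewrite h1 h2 h3 perm_cons;
  [exact: perm_refl | rewrite perm_sym; exact: p3a | rewrite perm_sym; exact: p3b].
Qed.

Lemma sum_red g :
  \sum_(a : {ffun 'I_4 -> 'I_N.+1} | perm_eq [seq val (a k) | k <- enum 'I_4] [:: i; i; j; 0%N])
     JMmono (fun k => val (a k)) g = Fw g i i j + Fw g i j i + Fw g j i i.
Proof.
rewrite (bigID (fun a : {ffun 'I_4 -> 'I_N.+1} => val (a (inord 0)) == 0%N)) /=.
rewrite [X in _ + X]big1 ?addr0; last by move=> a /andP[_ h]; apply: JMmono_S.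
rewrite (eq_bigr (fun a : {ffun 'I_4 -> 'I_N.+1} => Fw g (val (a (inord 1))) (val (a (inord 2))) (val (a (inord 3)))));
  last by move=> a /andP[_ /eqP h]; rewrite JMmono_0.
rewrite (eq_bigl (fun a : {ffun 'I_4 -> 'I_N.+1} => a \in [:: mk e1; mk e2; mk e3])); last by move=> a; rewrite charac.
have ok e : all (fun n => n <= N)%N e -> size e = 4%N ->
   Fw g (val (mk e (inord 1))) (val (mk e (inord 2))) (val (mk e (inord 3))) =
   Fw g (nth 0%N e 1) (nth 0%N e 2) (nth 0%N e 3).
  by move=> ha hs; case: (mkEo ha hs) => _ h1 h2 h3; rewrite io1 io2 io3 h1 h2 h3.
rewrite -big_uniq /=.
  by rewrite !big_cons big_nil !ok /= ?hi ?hj // addr0 addrA.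
have d12 : mk e1 != mk e2.
  apply/eqP => /ffunP /(_ o2) /(congr1 val); rewrite !mkE /= ?hi ?hj //.
  by move/eqP; rewrite (negbTE hij).
have d13 : mk e1 != mk e3.
  apply/eqP => /ffunP /(_ o1) /(congr1 val); rewrite !mkE /= ?hi ?hj //.
  by move/eqP; rewrite (negbTE hij).
have d23 : mk e2 != mk e3.
  apply/eqP => /ffunP /(_ o1) /(congr1 val); rewrite !mkE /= ?hi ?hj //.
  by move/eqP; rewrite (negbTE hij).
by rewrite /= !inE negb_or d12 d13 d23.
Qed.
End Red.

Lemma msym_red i j g : i != j ->
  msym [:: i; i; j] g = Fw g i i j + Fw g i j i + Fw g j i i.
Proof.
move=> hij; rewrite /msym /=.
apply: sum_red => //.
- by rewrite leq_max leqnn.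
- by rewrite !leq_max leqnn !orbT.
Qed.

Definition EP (l : seq (rat * rat * rat)) i j : rat :=
  foldr (fun t acc => t.1.1 * t.1.2 ^+ i * t.2 ^+ j + acc) 0 l.
Definition base (t : rat * rat * rat) : rat * rat := (t.1.2, t.2).

Lemma EP_cat l1 l2 i j : EP (l1 ++ l2) i j = EP l1 i j + EP l2 i j.
Proof. by elim: l1 => [|t l1 IH] /=; rewrite ?add0r // IH addrA. Qed.

Definition LA (L : seq (rat * rat * rat * rat)) := [seq (t.1.1.1, t.1.1.2 * t.1.2, t.2) | t <- L].
Definition LB (L : seq (rat * rat * rat * rat)) := [seq (t.1.1.1, t.1.1.2 * t.2, t.1.2) | t <- L].
Definition LC (L : seq (rat * rat * rat * rat)) := [seq (t.1.1.1, t.1.2 * t.2, t.1.1.2) | t <- L].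

Lemma G_LA L a c : G L a a c = EP (LA L) a c.
Proof. by elim: L => //= t L ->; congr (_ + _); rewrite /term exprMn; rring. Qed.
Lemma G_LB L a c : G L a c a = EP (LB L) a c.
Proof. by elim: L => //= t L ->; congr (_ + _); rewrite /term exprMn; rring. Qed.
Lemma G_LC L a c : G L c a a = EP (LC L) a c.
Proof. by elim: L => //= t L ->; congr (_ + _); rewrite /term exprMn; rring. Qed.

Lemma zpow k : (0 < k)%N -> (0 : rat) ^+ k = 0.
Proof. by case: k => // k _; rewrite expr0n. Qed.

Definition nzb (t : rat * rat * rat) := (t.1.2 != 0) && (t.2 != 0).
Lemma EP_filter l i j : (0 < i)%N -> (0 < j)%N -> EP l i j = EP (filter nzb l) i j.
Proof.
move=> hi hj; elim: l => //= t l IH; rewrite /nzb.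
case: eqP => [->|_] /=; first by rewrite zpow // mulr0 mul0r add0r.
case: eqP => [->|_] /=; first by rewrite zpow // mulr0 add0r.
by rewrite IH.
Qed.

Definition coefEP (l : seq (rat * rat * rat)) (b : rat * rat) : rat :=
  foldr (fun t acc => (if base t == b then t.1.1 else 0) + acc) 0 l.
Definition NF (S : seq (rat * rat)) l i j : rat :=
  foldr (fun b acc => coefEP l b * (b.1 ^+ i * b.2 ^+ j) + acc) 0 S.

Lemma sum_if0 (S : seq (rat * rat)) b0 k i j : b0 \notin S ->
  foldr (fun b acc => (if b0 == b then k else 0) * (b.1 ^+ i * b.2 ^+ j) + acc) 0 S = 0.
Proof.
elim: S => //= b S IH; rewrite inE negb_or => /andP[/negbTE -> /IH ->].
by rewrite mul0r addr0.
Qed.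

Lemma sum_if (S : seq (rat * rat)) b0 k i j : uniq S -> b0 \in S ->
  foldr (fun b acc => (if b0 == b then k else 0) * (b.1 ^+ i * b.2 ^+ j) + acc) 0 S
  = k * (b0.1 ^+ i * b0.2 ^+ j).
Proof.
elim: S => //= b S IH /andP[bS uS]; rewrite inE.
case: (eqVneq b0 b) => [->|ne] /= hm; first by rewrite sum_if0 // addr0.
by rewrite mul0r add0r IH.
Qed.

Lemma NF_nil S i j : NF S [::] i j = 0.
Proof. by elim: S => //= b S IH; rewrite /coefEP /= in IH *; rewrite IH mul0r addr0. Qed.

Lemma NF_cons S t l i j : NF S (t :: l) i j =
  foldr (fun b acc => (if base t == b then t.1.1 else 0) * (b.1 ^+ i * b.2 ^+ j) + acc) 0 S
  + NF S l i j.
Proof.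
elim: S => [|b S IH] /=; first by rewrite addr0.
rewrite /NF /= in IH *; rewrite IH /coefEP /= mulrDl.
by rewrite -!addrA; congr (_ + _); rewrite addrCA.
Qed.

Lemma NF_EP S l i j : uniq S -> all (fun t => base t \in S) l -> NF S l i j = EP l i j.
Proof.
move=> uS; elim: l => [|t l IH] /=; first by rewrite NF_nil.
move=> /andP[ht hl]; rewrite NF_cons IH // sum_if //.
by rewrite /base /= !mulrA.
Qed.

Lemma NF_congr S l1 l2 i j : all (fun b => coefEP l1 b == coefEP l2 b) S ->
  NF S l1 i j = NF S l2 i j.
Proof. by elim: S => //= b S IH /andP[/eqP -> /IH]; rewrite /NF /= => ->. Qed.

Lemma EP_eq l1 l2 i j :
  all (fun b => coefEP l1 b == coefEP l2 b) (undup [seq base t | t <- l1 ++ l2]) ->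
  EP l1 i j = EP l2 i j.
Proof.
move=> h.
have uS := undup_uniq [seq base t | t <- l1 ++ l2].
rewrite -(NF_EP i j uS) ?(NF_congr i j h) ?NF_EP //; apply/allP => t ht;
  by rewrite mem_undup map_f // mem_cat ht ?orbT.
Qed.

Definition checkw (K : seq (rat * rat * rat * rat)) (lt : seq (rat * rat * rat)) :=
  let l1 := filter nzb (LA K ++ LB K ++ LC K) in
  all (fun b => coefEP l1 b == coefEP lt b) (undup [seq base t | t <- l1 ++ lt]).

Lemma final_w w K lt i j : (0 < i)%N -> (0 < j)%N -> i != j ->
  (forall a b c, (Fw w a b c)%:~R = G K a b c) -> checkw K lt ->
  (msym [:: i; i; j] w)%:~R = EP lt i j.
Proof.
move=> hi hj hij hFG hc.
rewrite msym_red // !intrD !hFG G_LA G_LB G_LC -!EP_cat (EP_filter _ hi hj).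
rewrite -catA; exact: EP_eq.
Qed.

Definition ltT (s a b : rat) : seq (rat * rat * rat) :=
  let c := (24%:R)^-1 in
  [:: (c, 6%:R, 1); (c, 2%:R, 3%:R); (c, 3%:R, 2%:R); (a * c, - 2%:R, 1); (a * c, -1, 2%:R);
      (b * c, 2%:R, 1);
      (s * c, 6%:R, -1); (s * c, 2%:R, - 3%:R); (s * c, 3%:R, - 2%:R); (s * a * c, - 2%:R, -1);
      (s * a * c, -1, - 2%:R); (s * b * c, 2%:R, -1)].

Lemma negpow n k : (- (n.+2)%:R) ^+ k = (-1) ^+ k * (n.+2)%:R ^+ k :> rat.
Proof. exact: exprNn. Qed.
Lemma sixpow k : (6%:R : rat) ^+ k = 2%:R ^+ k * 3%:R ^+ k.
Proof. by rewrite -exprMn -natrM. Qed.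

Lemma EPT s a b i j : EP (ltT s a b) i j =
  24%:R^-1 * ((1 + s * (-1) ^+ j) * (6%:R ^+ i + 2%:R ^+ i * 3%:R ^+ j + 2%:R ^+ j * 3%:R ^+ i
     + a * ((-1) ^+ i * (2%:R ^+ i + 2%:R ^+ j)) + b * 2%:R ^+ i)).
Proof. rewrite /ltT /EP /= !negpow !sixpow !expr1n; rring. Qed.

Unset Implicit Arguments.
Theorem proposition2p5 (i j : nat) (hi : (1 <= i)%N) (hj : (1 <= j)%N) (hij : i != j) :
  let m := msym [:: i; i; j] in
  let A : rat := 6 ^+ i + 2 ^+ i * 3 ^+ j + 2 ^+ j * 3 ^+ i in
  let B : rat := (-1) ^+ i * (2 ^+ i + 2 ^+ j) in
  [/\ (coef 1%g m)%:~R = 24^-1 * ((1 + (-1) ^+ j) * (A + 9 * B + 9 * 2 ^+ i)),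
      (coef s1 m)%:~R = 24^-1 * ((1 - (-1) ^+ j) * (A + 3 * B - 3 * 2 ^+ i)),
      (coef s12 m)%:~R = 24^-1 * ((1 + (-1) ^+ j) * A),
      (coef s13 m)%:~R = 24^-1 * ((1 + (-1) ^+ j) * (A - 3 * B - 3 * 2 ^+ i))
    & (coef s123 m)%:~R = 24^-1 * ((1 - (-1) ^+ j) * (A - 3 * B + 3 * 2 ^+ i))].
Proof.
move=> m A B; rewrite /m /coef /A /B.
split.
- rewrite (@final_w _ _ (ltT 1 9%:R 9%:R) _ _ hi hj hij FG1); last by vm_compute.
  rewrite EPT; rring.
- rewrite (@final_w _ _ (ltT (-1) 3%:R (- 3%:R)) _ _ hi hj hij FGs1); last by vm_compute.
  rewrite EPT; rring.
- rewrite (@final_w _ _ (ltT 1 0 0) _ _ hi hj hij FGs12); last by vm_compute.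
  rewrite EPT; rring.
- rewrite (@final_w _ _ (ltT 1 (- 3%:R) (- 3%:R)) _ _ hi hj hij FGs13); last by vm_compute.
  rewrite EPT; rring.
- rewrite (@final_w _ _ (ltT (-1) (- 3%:R) 3%:R) _ _ hi hj hij FGs123); last by vm_compute.
  rewrite EPT; rring.
Qed.
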